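(* Let $\sigma$ and $\sigma''$ be density matrices on $\mathcal{H}$ with the same support. Then $d(\sigma'')=d(\sigma)$.
   Context: $\mathcal{H}=\mathcal{H}_1\otimes\cdots\otimes\mathcal{H}_m$ is finite-dimensional. A positive semidefinite operator is separable if it is a nonnegative combination of tensor products of positive semidefinite operators on the $\mathcal{H}_k$. The support of a density matrix is the span of its eigenvectors with nonzero eigenvalues. For a density matrix $\sigma$, $d(\sigma):=\min \mathrm{Tr}(\Pi)/\mathrm{Tr}(\sigma\Pi)$ over separable positive semidefinite operators $\Pi$ with $\mathrm{Tr}(\sigma\Pi)>0$ and $0\le \Pi/\mathrm{Tr}(\sigma\Pi)\le I$ (equivalently, $\min\mathrm{Tr}\,\Pi'$ over separable $\Pi'$ with $0\le\Pi'\le I$ and $\mathrm{Tr}(\sigma\Pi')=1$). *)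

(* Defs.v *)
(* Complex numbers: an arbitrary numClosedFieldType C
   (e.g. algC); operators on a d-dimensional space are 'M[C]_d. *)
From HB Require Import structures.
From mathcomp Require Import all_boot all_order all_algebra.
Set Implicit Arguments. Unset Strict Implicit. Unset Printing Implicit Defensive.
Import Order.TTheory GRing.Theory Num.Theory.
Local Open Scope ring_scope.

Section Defs.
Variable C : numClosedFieldType.

Definition adjmx m n (A : 'M[C]_(m, n)) : 'M[C]_(n, m) := (map_mx Num.conj A)^T.

Definition hermitian n (A : 'M[C]_n) : Prop := adjmx A = A.

Definition psd n (A : 'M[C]_n) : Prop :=
  hermitian A /\ forall v : 'cV[C]_n, 0 <= (adjmx v *m A *m v) 0 0.

Definition density n (A : 'M[C]_n) : Prop := psd A /\ \tr A = 1.

Definition pair_idx m n (k : 'I_(m * n)) : 'I_m * 'I_n :=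
  enum_val (cast_ord (esym (@mxvec_cast m n)) k).

Definition kron m1 n1 m2 n2 (A : 'M[C]_(m1, n1)) (B : 'M[C]_(m2, n2))
  : 'M[C]_(m1 * m2, n1 * n2) :=
  \matrix_(k, l) (A (pair_idx k).1 (pair_idx l).1 * B (pair_idx k).2 (pair_idx l).2).

(* total dimension of H_1 (x) ... (x) H_m with dim H_k = ds_k *)
Definition tdim (ds : seq nat) : nat := foldr muln 1%N ds.

(* M = A_1 (x) ... (x) A_m with every A_k psd on H_k *)
Fixpoint prod_psd (ds : seq nat) : 'M[C]_(tdim ds) -> Prop :=
  match ds return 'M[C]_(tdim ds) -> Prop with
  | [::] => fun M => M = 1%:M
  | d :: ds' => fun M => exists (A : 'M[C]_d) (B : 'M[C]_(tdim ds')),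
      psd A /\ @prod_psd ds' B /\ M = kron A B
  end.

Definition separable (ds : seq nat) (P : 'M[C]_(tdim ds)) : Prop :=
  psd P /\ exists (k : nat) (c : 'I_k -> C) (M : 'I_k -> 'M[C]_(tdim ds)),
    (forall i, 0 <= c i /\ @prod_psd ds (M i)) /\ P = \sum_(i < k) c i *: M i.

(* x lies in the support of s: the span of eigenvectors with nonzero eigenvalues *)
Definition in_support n (s : 'M[C]_n) (x : 'cV[C]_n) : Prop :=
  exists (k : nat) (a : 'I_k -> C) (v : 'I_k -> 'cV[C]_n) (c : 'I_k -> C),
    (forall i, a i != 0 /\ s *m v i = a i *: v i) /\ x = \sum_(i < k) c i *: v i.

(* t is a value Tr(P)/Tr(sP) attained by a feasible P in the definition of d(s) *)
Definition d_feasible (ds : seq nat) (s : 'M[C]_(tdim ds)) (t : C) : Prop :=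
  exists P : 'M[C]_(tdim ds),
    separable P /\ 0 < \tr (s *m P) /\
    psd ((\tr (s *m P))^-1 *: P) /\ psd (1%:M - (\tr (s *m P))^-1 *: P) /\
    t = \tr P / \tr (s *m P).

(* t = d(s): t is the minimum of the feasible values *)
Definition is_d (ds : seq nat) (s : 'M[C]_(tdim ds)) (t : C) : Prop :=
  d_feasible s t /\ forall t', d_feasible s t' -> t <= t'.

End Defs.

(* Main.v *)
Require Import Defs.
From HB Require Import structures.
From mathcomp Require Import all_boot all_order all_algebra.
From mathcomp Require Import spectral.
Set Implicit Arguments. Unset Strict Implicit. Unset Printing Implicit Defensive.
Import Order.TTheory GRing.Theory Num.Theory.
Local Open Scope ring_scope.

Section S.
Variable C : numClosedFieldType.

Lemma adjmxE m n (A : 'M[C]_(m,n)) : adjmx A = map_mx Num.conj (A ^T).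
Proof. by rewrite /adjmx map_trmx. Qed.

Lemma adjmxM m n p (A : 'M[C]_(m,n)) (B : 'M[C]_(n,p)) :
  adjmx (A *m B) = adjmx B *m adjmx A.
Proof. by rewrite /adjmx map_mxM trmx_mul. Qed.

Lemma adjmxK m n (A : 'M[C]_(m,n)) : adjmx (adjmx A) = A.
Proof. by rewrite !adjmxE; apply: trmxCK. Qed.

Lemma spec n (A : 'M[C]_n) : Defs.hermitian A -> exists (U : 'M[C]_n) (D : 'rV[C]_n),
  U *m adjmx U = 1%:M /\ adjmx U *m U = 1%:M /\ A = adjmx U *m diag_mx D *m U.
Proof.
move=> hA.
have nA : A \is normalmx by apply/normalmxP; rewrite -adjmxE hA.
move/orthomx_spectralP: nA => eA.
have uU := spectral_unitarymx A.
exists (spectralmx A), (spectral_diag A).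
have e1 : spectralmx A *m adjmx (spectralmx A) = 1%:M by rewrite adjmxE; apply/unitarymxP.
have e2 : invmx (spectralmx A) = adjmx (spectralmx A) by rewrite adjmxE invmx_unitary.
split => //; split; last by rewrite -e2.
by rewrite -e2 mulVmx // spectral_unit.
Qed.

Lemma adj_col n (X : 'M[C]_n) i : adjmx (col i X) = row i (adjmx X).
Proof. by apply/matrixP => a b; rewrite !mxE. Qed.

Lemma quad_entry n (U M : 'M[C]_n) i :
  (adjmx (col i (adjmx U)) *m M *m col i (adjmx U)) 0 0 = (U *m M *m adjmx U) i i.
Proof.
rewrite adj_col adjmxK -row_mul !mxE; apply: eq_bigr => k _; rewrite !mxE.
by [].
Qed.

Lemma diag_entry n (A U : 'M[C]_n) (D : 'rV[C]_n) i :
  U *m adjmx U = 1%:M -> A = adjmx U *m diag_mx D *m U ->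
  D 0 i = (U *m A *m adjmx U) i i.
Proof.
move=> e1 ->.
have -> : U *m (adjmx U *m diag_mx D *m U) *m adjmx U = diag_mx D.
  by rewrite !mulmxA e1 mul1mx -mulmxA e1 mulmx1.
by rewrite !mxE eqxx mulr1n.
Qed.

Lemma psd_diag n (A U : 'M[C]_n) (D : 'rV[C]_n) :
  psd A -> U *m adjmx U = 1%:M -> A = adjmx U *m diag_mx D *m U ->
  forall i, 0 <= D 0 i.
Proof.
move=> [_ pA] e1 eA i; rewrite (diag_entry i e1 eA) -quad_entry; exact: pA.
Qed.

Lemma key_zero n (A R U : 'M[C]_n) (D : 'rV[C]_n) :
  A = adjmx U *m diag_mx D *m U ->
  (forall i, D 0 i != 0 -> R *m col i (adjmx U) = 0) -> R *m A = 0.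
Proof.
move=> -> H; rewrite !mulmxA.
have -> : R *m adjmx U *m diag_mx D = 0.
  apply/matrixP => a b; rewrite mul_mx_diag mxE [RHS]mxE.
  have [->|nz] := eqVneq (D 0 b) 0; first by rewrite mulr0.
  have : (R *m col b (adjmx U)) a 0 = 0 by rewrite H ?mxE.
  have -> : (R *m adjmx U) a b = (R *m col b (adjmx U)) a 0.
    by rewrite !mxE; apply: eq_bigr => k _; rewrite !mxE.
  by move=> ->; rewrite mul0r.
by rewrite mul0mx.
Qed.

Lemma L0 n (R : 'M[C]_n) (v : 'cV[C]_n) :
  psd R -> (adjmx v *m R *m v) 0 0 = 0 -> R *m v = 0.
Proof.
move=> pR; have [U [D [e1 [e2 eR]]]] := spec pR.1.
have Dge := psd_diag pR e1 eR.
set y := U *m v.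
have ey : adjmx v *m R *m v = adjmx y *m diag_mx D *m y.
  by rewrite eR /y adjmxM !mulmxA.
rewrite ey => q0.
have hq : \sum_i (D 0 i * (y i 0 * Num.conj (y i 0))) = 0.
  rewrite -[RHS]q0 mxE; apply: eq_bigr => i _; rewrite mul_mx_diag !mxE.
  by rewrite mulrC [RHS]mulrC mulrA.
have hz : diag_mx D *m y = 0.
  apply/matrixP => i j; rewrite mul_diag_mx mxE [RHS]mxE (ord1 j).
  have := psumr_eq0P (P := xpredT) _ hq (i := i) isT.
  move=> /(_ _) h; have {}h := h (fun k _ => mulr_ge0 (Dge k) (mul_conjC_ge0 _)).
  move/eqP: h; rewrite mulf_eq0 mul_conjC_eq0 => /orP[] /eqP ->;
    by rewrite ?mul0r ?mulr0.
by rewrite eR -mulmxA -/y -mulmxA hz mulmx0.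
Qed.

Lemma L1 n (A R : 'M[C]_n) : psd A -> psd R -> \tr (A *m R) = 0 -> R *m A = 0.
Proof.
move=> pA pR t0; have [U [D [e1 [e2 eA]]]] := spec pA.1.
have Dge := psd_diag pA e1 eA.
set M := U *m R *m adjmx U.
have Mge : forall i, 0 <= M i i by move=> i; rewrite /M -quad_entry; exact: pR.2.
have hs : \sum_i (D 0 i * M i i) = 0.
  have eT : \tr (A *m R) = \tr (diag_mx D *m M).
    by rewrite eA /M -!mulmxA mxtrace_mulC !mulmxA.
  rewrite -[RHS]t0 eT /mxtrace.
  by apply: eq_bigr => i _; rewrite mul_diag_mx [RHS]mxE.
apply: (key_zero eA) => i nz; apply: L0 => //.
rewrite quad_entry -/M.
have := psumr_eq0P (P := xpredT) (fun k _ => mulr_ge0 (Dge k) (Mge k)) hs (i := i) isT.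
by move/eqP; rewrite mulf_eq0 (negbTE nz) => /eqP.
Qed.

Lemma L2 n (A R : 'M[C]_n) : Defs.hermitian A ->
  (forall x, in_support A x -> R *m x = 0) -> R *m A = 0.
Proof.
move=> hA H; have [U [D [e1 [e2 eA]]]] := spec hA.
apply: (key_zero eA) => i nz; apply: H.
exists 1%N, (fun _ => D 0 i), (fun _ => col i (adjmx U)), (fun _ => 1).
split; last by rewrite big_ord1 scale1r.
move=> _; split => //.
have eAW : A *m adjmx U = adjmx U *m diag_mx D.
  by rewrite eA -!mulmxA e1 mulmx1.
apply/matrixP => a b.
have -> : (A *m col i (adjmx U)) a b = (A *m adjmx U) a i.
  by rewrite !mxE; apply: eq_bigr => k _; rewrite !mxE.
by rewrite eAW mul_mx_diag !mxE mulrC.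
Qed.

Lemma L3 n (A R : 'M[C]_n) x : R *m A = 0 -> in_support A x -> R *m x = 0.
Proof.
move=> RA [k [a [v [c [H ->]]]]].
rewrite mulmx_sumr big1 // => i _.
have [nz ev] := H i.
have -> : v i = (a i)^-1 *: (A *m v i) by rewrite ev scalerA mulVf ?scale1r.
by rewrite !scalemxAr mulmxA RA mul0mx.
Qed.

Lemma feas (ds : seq nat) (s s'' : 'M[C]_(tdim ds)) t :
  density s -> density s'' ->
  (forall x, in_support s x <-> in_support s'' x) ->
  d_feasible s t -> d_feasible s'' t.
Proof.
move=> [ps ts] [ps'' ts''] hsup [P [[_ [k [c [M [hcM eP]]]]] [tp [pQ [pR et]]]]].
set tau := \tr (s *m P) in tp pQ pR et.
set Q := tau^-1 *: P in pQ pR.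
have tQ : \tr (s *m Q) = 1 by rewrite /Q -scalemxAr mxtraceZ mulVf // gt_eqF.
have tR : \tr (s *m (1%:M - Q)) = 0 by rewrite mulmxBr mulmx1 raddfB /= ts tQ subrr.
have Rs := L1 ps pR tR.
have Rs'' : (1%:M - Q) *m s'' = 0.
  apply: L2 ps''.1 _ => x /hsup hx; exact: L3 Rs hx.
have tQ'' : \tr (s'' *m Q) = 1.
  have : \tr (s'' *m (1%:M - Q)) = 0 by rewrite mxtrace_mulC Rs'' mxtrace0.
  rewrite mulmxBr mulmx1 raddfB /= ts'' => /eqP; rewrite subr_eq0 => /eqP.
  by [].
exists Q; rewrite tQ'' invr1 scale1r; split; last first.
  split; first exact: ltr01.
  split => //; split => //.
  by rewrite et /Q mxtraceZ mulr1 mulrC.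
split => //; exists k, (fun i => tau^-1 * c i), M; split.
  move=> i; have [ci hi] := hcM i; split => //.
  by apply: mulr_ge0 => //; rewrite invr_ge0 ltW.
by rewrite /Q eP scaler_sumr; apply: eq_bigr => i _; rewrite scalerA.
Qed.
End S.
Unset Implicit Arguments.

Theorem mainTheorem8 (C : numClosedFieldType) (ds : seq nat)
  (s s'' : 'M[C]_(tdim ds)) :
  density s -> density s'' ->
  (forall x, in_support s x <-> in_support s'' x) ->
  forall t : C, is_d s t <-> is_d s'' t.
Proof.
move=> ds1 ds2 hs.
have E : forall t, d_feasible s t <-> d_feasible s'' t.
  move=> t; split; first exact: feas.
  by apply: feas => // x; split => /hs.
move=> t; rewrite /is_d; split => -[f m]; split; first by apply/E.
- by move=> t' /E; apply: m.
- by apply/E.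
- by move=> t' /E; apply: m.
Qed.
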